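(* Let $c\ge2$, $1\le d\le c-1$ an integer, and $\Gamma$ a $c$-uniform unoriented hypergraph with $E\ne\varnothing$ and no isolated vertices, with smallest normalized Laplacian eigenvalue $\lambda_1$ and $d$-proper coloring number $\chi_d$. If $\chi_d=\dfrac{c-\lambda_1}{d-\lambda_1}$, then for every $d$-proper $\chi_d$-coloring with color classes $V_1,\dots,V_{\chi_d}$: (1) $|e\cap V_i|\in\{0,d\}$ for every $e\in E$ and every $i$; (2) for all distinct $i,j$, the function $g_{ij}$ is an eigenfunction of $L$ with eigenvalue $\lambda_1=\dfrac{d\chi_d-c}{\chi_d-1}$; (3) for all distinct $i,j$ and all $v\in V_i$, $\bigl|\{e\in E: v\in e,\ e\cap V_j\neq\varnothing\}\bigr|=\dfrac{\deg v\,(c/d-1)}{\chi_d-1}$. Moreover, without assuming equality: for any $d$-proper $\chi_d$-coloring satisfying (1), the functions $g_{ij}$ ($i\neq j$) are all eigenfunctions of $L$ (necessarily with eigenvalue $(d\chi_d-c)/(\chi_d-1)$) if and only if (3) holds.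
   Context: A hypergraph has finite vertex set $V$ and edge set $E\subseteq\mathcal P(V)$; it is $c$-uniform if $|e|=c$ for all $e$, and unoriented means all incidences have orientation $+1$. $\deg v=|\{e\in E: v\in e\}|\ge1$, $D=\mathrm{diag}(\deg v)$, adjacency $A_{v,v}=0$ and $A_{v,w}=-|\{e\in E: v,w\in e\}|$ for $v\ne w$, normalized Laplacian $L=\mathrm{Id}-D^{-1}A$ with eigenvalues $\lambda_1\le\dots\le\lambda_N$. A $k$-coloring $V\to\{1,\dots,k\}$ is $d$-proper if every edge contains at most $d$ vertices of each color; $\chi_d$ is the least $k$ admitting one (here $\chi_d\ge2$). Given color classes $V_1,\dots,V_k$ and distinct $i,j$, $g_{ij}(w)=1$ if $w\in V_i$, $-1$ if $w\in V_j$, $0$ otherwise. *)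

(* Defs.v *)
From HB Require Import structures.
From mathcomp Require Import all_boot all_order all_algebra.
From mathcomp Require Import reals.
Set Implicit Arguments. Unset Strict Implicit. Unset Printing Implicit Defensive.
Import Order.TTheory GRing.Theory Num.Theory.
Local Open Scope ring_scope.

Section Hyper.
Variables (V : finType) (E : {set {set V}}).

Definition uniform (c : nat) : Prop := forall e, e \in E -> #|e| = c.

Definition hdeg (v : V) : nat := #|[set e in E | v \in e]|.

Definition no_isolated : Prop := forall v : V, (1 <= hdeg v)%N.

Variable R : realType.

Definition hadj (v w : V) : R :=
  if v == w then 0 else - (#|[set e in E | (v \in e) && (w \in e)]|)%:R.

Definition hlap (f : V -> R) (v : V) : R :=
  f v - (hdeg v)%:R^-1 * \sum_(w : V) hadj v w * f w.

Definition eigenfun (f : V -> R) (mu : R) : Prop :=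
  (exists v, f v != 0) /\ forall v, hlap f v = mu * f v.

Definition is_eigval (mu : R) : Prop := exists f, eigenfun f mu.

Definition smallest_eigval (lam1 : R) : Prop :=
  is_eigval lam1 /\ forall mu, is_eigval mu -> lam1 <= mu.

Definition dproper (d k : nat) (col : V -> 'I_k) : Prop :=
  forall e, e \in E -> forall i : 'I_k, (#|[set v in e | col v == i]| <= d)%N.

Definition is_chi (d chi : nat) : Prop :=
  (exists col : V -> 'I_chi, dproper d col) /\
  forall k, (k < chi)%N -> ~ exists col : V -> 'I_k, dproper d col.

Definition cclass k (col : V -> 'I_k) (i : 'I_k) : {set V} :=
  [set v | col v == i].

Definition gfun k (col : V -> 'I_k) (i j : 'I_k) (w : V) : R :=
  if col w == i then 1 else if col w == j then -1 else 0.

Definition cond1 (d k : nat) (col : V -> 'I_k) : Prop :=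
  forall e, e \in E -> forall i : 'I_k,
    #|e :&: cclass col i| = 0%N \/ #|e :&: cclass col i| = d.

Definition cond3 (c d k : nat) (col : V -> 'I_k) : Prop :=
  forall i j : 'I_k, i != j -> forall v, v \in cclass col i ->
    (#|[set e in E | (v \in e) && (e :&: cclass col j != set0)]|)%:R
      = (hdeg v)%:R * ((c%:R / d%:R - 1) / (k%:R - 1)) :> R.

End Hyper.

(* Main.v *)
Require Import Defs.
From HB Require Import structures.
From mathcomp Require Import all_boot all_order all_algebra.
From mathcomp Require Import reals.
From mathcomp Require all_classical all_reals topology normedtype derive.
From mathcomp Require Import ring lra zify.
From Stdlib Require Import FunctionalExtensionality.
Set Implicit Arguments. Unset Strict Implicit. Unset Printing Implicit Defensive.
Import Order.TTheory GRing.Theory Num.Theory.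
Local Open Scope ring_scope.
Module Analysis.
Import all_classical all_reals topology normedtype derive.
Import numFieldNormedType.Exports.
Local Open Scope classical_set_scope.

Lemma cont_sum (R : realType) (T : topologicalType) (I : Type) (r : seq I) (P : pred I)
  (F : I -> T -> R) : (forall i, continuous (F i)) ->
  continuous (fun x => \sum_(i <- r | P i) F i x).
Proof.
move=> cF; elim: r => [|i r IH].
  under eq_fun do rewrite big_nil. exact: cst_continuous.
under eq_fun do rewrite big_cons.
case: (P i).
  move=> x; apply: continuousD; [exact: cF | exact: IH].
exact: IH.
Qed.

Lemma cont_mul (R : realType) (T : topologicalType) (f g : T -> R) :
  continuous f -> continuous g -> continuous (fun x => f x * g x).
Proof. by move=> cf cg x; exact: (@continuousM R T f g x (cf x) (cg x)). Qed.

Lemma cont_sqr (R : realType) (T : topologicalType) (g : T -> R) :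
  continuous g -> continuous (fun x => g x ^+ 2).
Proof.
move=> cg; under eq_fun do rewrite expr2.
exact: cont_mul.
Qed.

Lemma min_exists (R : realType) (V : finType) (w : V -> R) (E : {set {set V}}) (v0 : V) :
  (forall v, 1 <= w v) ->
  exists f0 : V -> R, \sum_v w v * f0 v ^+ 2 = 1 /\
    forall f : V -> R, \sum_v w v * f v ^+ 2 = 1 ->
      \sum_(e in E) (\sum_(u in e) f0 u) ^+ 2 <= \sum_(e in E) (\sum_(u in e) f u) ^+ 2.
Proof.
move=> w1.
pose n := #|V|.
pose fx (x : 'rV[R]_n) : V -> R := fun v => x ord0 (enum_rank v).
pose rx (f : V -> R) : 'rV[R]_n := \row_i f (enum_val i).
have fxK f : fx (rx f) = f by apply: funext => v; rewrite /fx /rx mxE enum_rankK.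
pose Df (f : V -> R) := \sum_v w v * f v ^+ 2.
pose Nf (f : V -> R) := \sum_(e in E) (\sum_(u in e) f u) ^+ 2.
have cc v : continuous (fun x : 'rV[R]_n => fx x v).
  move=> x; exact: (@coord_continuous R 1 n ord0 (enum_rank v)).
have cD : continuous (fun x => Df (fx x)).
  apply: cont_sum => v; apply: cont_mul; first exact: cst_continuous.
  exact: (cont_sqr (cc v)).
have cN : continuous (fun x => Nf (fx x)).
  apply: cont_sum => e; apply: cont_sqr; exact: cont_sum.
pose A := [set x : 'rV[R]_n | Df (fx x) = 1].
have A0 : A !=set0.
  exists (rx (fun v => if v == v0 then Num.sqrt (w v0)^-1 else 0)).
  rewrite /A /= fxK /Df (bigD1 v0) //= eqxx big1 ?addr0.
    rewrite sqr_sqrtr ?invr_ge0 ?(le_trans _ (w1 v0)) // divff //.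
    by rewrite gt_eqF // (lt_le_trans _ (w1 v0)).
  by move=> v /negbTE ->; rewrite expr0n mulr0.
have cA : compact A.
  have Bc : compact [set v : 'rV[R]_n | forall i, `[(-1:R), 1]%classic (v ord0 i)].
    exact: (@rV_compact _ n (fun=> `[(-1:R), 1]%classic) (fun=> @segment_compact R (-1) 1)).
  apply: (subclosed_compact _ Bc).
    exact: (proj1 (continuous_closedP _) cD _ (@closed_eq R 1)).
  move=> x Ax i /=; rewrite in_itv /= -ler_norml.
  have -> : x ord0 i = fx x (enum_val i) by rewrite /fx enum_valK.
  rewrite -(expr_le1 (n:=2)) // real_normK ?num_real //.
  have : w (enum_val i) * fx x (enum_val i) ^+ 2 <= 1.
    rewrite -Ax /Df (bigD1 (enum_val i)) //= lerDl sumr_ge0 // => v _.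
    by rewrite mulr_ge0 ?sqr_ge0 // (le_trans _ (w1 v)).
  apply: le_trans; rewrite ler_peMl ?sqr_ge0 //.
have [c cinA minc] := compact_EVT_min A0 cA (continuous_subspaceT cN).
exists (fx c); split; first by rewrite inE in cinA.
move=> f Df1; have := minc (rx f); rewrite fxK; apply.
by rewrite inE /A /= fxK.
Qed.

End Analysis.
Import Analysis.

Section Basics.
Variables (R : realType) (V : finType) (E : {set {set V}}).

Definition bR (b : bool) : R := if b then 1 else 0.

Lemma cntR (T : finType) (A : {set T}) (P : pred T) :
  (#|[set x in A | P x]|)%:R = \sum_(x in A) bR (P x).
Proof.
rewrite (big_mkcond (fun x => x \in A)) /=.
have -> : \sum_x (if x \in A then bR (P x) else 0) = \sum_(x | (x \in A) && P x) 1.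
  rewrite [RHS]big_mkcond; apply: eq_bigr => x _ /=.
  by rewrite /bR; case: (x \in A); case: (P x).
rewrite sumr_const; congr (_ %:R); apply: eq_card => x; rewrite !inE //.
Qed.

Definition degR (v : V) : R := (hdeg E v)%:R.
Definition sE (f : V -> R) (e : {set V}) : R := \sum_(u in e) f u.
Definition Sf (f : V -> R) (v : V) : R := \sum_(e in E) bR (v \in e) * sE f e.
Definition Nf (f : V -> R) : R := \sum_(e in E) sE f e ^+ 2.
Definition Df (f : V -> R) : R := \sum_v degR v * f v ^+ 2.

Lemma degRE v : degR v = \sum_(e in E) bR (v \in e).
Proof. by rewrite /degR /hdeg cntR. Qed.

Lemma exchG (F : V -> {set V} -> R) :
  \sum_v \sum_(e in E) bR (v \in e) * F v e = \sum_(e in E) \sum_(u in e) F u e.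
Proof.
rewrite exchange_big /=; apply: eq_bigr => e _.
rewrite [RHS]big_mkcond /=; apply: eq_bigr => u _.
by rewrite /bR; case: (u \in e); rewrite ?mul1r ?mul0r.
Qed.

Lemma degsum (F : V -> R) : \sum_v degR v * F v = \sum_(e in E) \sum_(u in e) F u.
Proof.
rewrite -exchG; apply: eq_bigr => v _; rewrite degRE mulr_suml.
by apply: eq_bigr => e _.
Qed.

Lemma DfE f : Df f = \sum_(e in E) \sum_(u in e) f u ^+ 2.
Proof. exact: degsum. Qed.

Lemma bilinE f h : \sum_v h v * Sf f v = \sum_(e in E) sE f e * sE h e.
Proof.
have -> : \sum_(e in E) sE f e * sE h e = \sum_(e in E) \sum_(u in e) sE f e * h u.
  by apply: eq_bigr => e _; rewrite /sE mulr_sumr.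
rewrite -exchG; apply: eq_bigr => v _; rewrite /Sf mulr_sumr.
by apply: eq_bigr => e _; ring.
Qed.

Lemma SfE f v : (hdeg E v)%:R * f v - \sum_w hadj E R v w * f w = Sf f v.
Proof.
have -> : Sf f v = \sum_w (#|[set e in E | (v \in e) && (w \in e)]|)%:R * f w.
  rewrite /Sf /sE.
  under eq_bigr do rewrite mulr_sumr.
  under eq_bigr do rewrite (big_mkcond (fun u => u \in _)).
  rewrite exchange_big /=; apply: eq_bigr => w _.
  rewrite cntR mulr_suml; apply: eq_bigr => e _ /=.
  by rewrite /bR; case: (v \in e); case: (w \in e); rewrite ?mul1r ?mul0r ?mulr0.
rewrite (bigD1 v) //= [X in _ = X](bigD1 v) //= /hadj eqxx mul0r add0r.
have -> : [set e in E | (v \in e) && (v \in e)] = [set e in E | v \in e].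
  by apply/setP => e; rewrite !inE andbb.
rewrite -/(hdeg E v); congr (_ + _).
rewrite -sumrN; apply: eq_bigr => w; rewrite eq_sym => /negbTE ->.
by rewrite mulNr opprK.
Qed.

Hypothesis noiso : no_isolated E.

Lemma degR_gt0 v : 0 < degR v.
Proof. by rewrite /degR ltr0n; apply: noiso. Qed.

Lemma hlapE f v : hlap E f v = (degR v)^-1 * Sf f v.
Proof.
rewrite -SfE /hlap -/(degR v) mulrBr mulrA mulVf ?mul1r //.
by rewrite gt_eqF // degR_gt0.
Qed.

End Basics.

Lemma lin0 (R : realType) (b q : R) : (forall t, 0 <= 2 * t * b + t ^+ 2 * q) -> b = 0.
Proof.
move=> H; pose s := (`|q| + 1)^-1.
have s0 : 0 < s by rewrite invr_gt0; apply: ltr_wpDl.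
have sq : s * q < 1.
  rewrite /s mulrC ltr_pdivrMr ?mul1r; last by apply: ltr_wpDl.
  by apply: (le_lt_trans (ler_norm q)); rewrite ltrDl.
have := H (- b * s).
have e : 2 * (- b * s) * b + (- b * s) ^+ 2 * q = b ^+ 2 * s * (s * q - 2) by ring.
rewrite e => h.
have b2 : 0 <= b ^+ 2 by rewrite sqr_ge0.
have : b ^+ 2 * s <= 0.
  have : b ^+ 2 * s * (s * q - 2) <= - (b ^+ 2 * s).
    have : b ^+ 2 * s * (s * q - 2) = - (b ^+ 2 * s) + b ^+ 2 * s * (s * q - 1) by ring.
    move=> ->; rewrite gerDl; apply: mulr_ge0_le0; first by rewrite mulr_ge0 // ltW.
    by rewrite subr_le0 ltW.
  lra.
move=> hbs; have hb : b ^+ 2 <= 0 by nra.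
have : b ^+ 2 = 0 by apply/eqP; rewrite eq_le hb b2.
by move/eqP; rewrite sqrf_eq0 => /eqP.
Qed.

Section Quad.
Variables (R : realType) (V : finType) (E : {set {set V}}).
Hypothesis noiso : no_isolated E.

Definition Qf (mu : R) (f : V -> R) := Nf E f - mu * Df E f.

Lemma QfE mu f : Qf mu f = \sum_(e in E) (sE f e ^+ 2 - mu * \sum_(u in e) f u ^+ 2).
Proof. by rewrite /Qf DfE /Nf sumrB mulr_sumr. Qed.

Lemma Qexp mu f h t :
  Qf mu (fun u => f u + t * h u) = Qf mu f
   + 2 * t * (\sum_v h v * (Sf E f v - mu * degR R E v * f v)) + t ^+ 2 * Qf mu h.
Proof.
have -> : \sum_v h v * (Sf E f v - mu * degR R E v * f v) =
   \sum_v h v * Sf E f v - mu * \sum_v degR R E v * (f v * h v).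
  rewrite mulr_sumr -sumrB; apply: eq_bigr => v _; ring.
rewrite bilinE degsum !QfE.
rewrite [mu * _]mulr_sumr -sumrB [2 * t * _]mulr_sumr [t ^+ 2 * _]mulr_sumr -!big_split /=.
apply: eq_bigr => e _.
have -> : sE (fun u => f u + t * h u) e = sE f e + t * sE h e.
  by rewrite /sE big_split /= mulr_sumr.
have -> : \sum_(u in e) (f u + t * h u) ^+ 2 =
   \sum_(u in e) f u ^+ 2 + 2 * t * \sum_(u in e) (f u * h u) + t ^+ 2 * \sum_(u in e) h u ^+ 2.
  rewrite !mulr_sumr -!big_split /=; apply: eq_bigr => u _; ring.
ring.
Qed.

Lemma eq_eigen mu f :
  (forall g, mu * Df E g <= Nf E g) -> mu * Df E f = Nf E f ->
  forall v, hlap E f v = mu * f v :> R.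
Proof.
move=> Hg Hf v.
pose h := fun u : V => bR R (u == v).
have Q0 : Qf mu f = 0 by rewrite /Qf Hf subrr.
have : \sum_w h w * (Sf E f w - mu * degR R E w * f w) = 0.
  apply: (@lin0 R _ (Qf mu h)) => t.
  have := Hg (fun u => f u + t * h u); rewrite -subr_ge0 -/(Qf mu _) Qexp Q0 add0r.
  by [].
rewrite (bigD1 v) //= big1 ?addr0; last first.
  by move=> w /negbTE hw; rewrite /h /bR hw mul0r.
rewrite /h /bR eqxx mul1r => /eqP; rewrite subr_eq0 => /eqP hS.
have dn : degR R E v != 0 by rewrite gt_eqF // degR_gt0.
by rewrite hlapE // hS; field.
Qed.

End Quad.

Lemma SQ (R : realType) k (y : 'I_k -> R) :
  \sum_i \sum_j (y i - y j) ^+ 2 = 2 * k%:R * \sum_i y i ^+ 2 - 2 * (\sum_i y i) ^+ 2.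
Proof.
have -> : \sum_i \sum_j (y i - y j) ^+ 2 =
  \sum_i (k%:R * y i ^+ 2 - 2 * y i * \sum_j y j + \sum_j y j ^+ 2).
  apply: eq_bigr => i _.
  have -> : \sum_j (y i - y j) ^+ 2 = \sum_j (y i ^+ 2 - 2 * y i * y j + y j ^+ 2).
    by apply: eq_bigr => j _; ring.
  rewrite !big_split /= sumrN sumr_const card_ord -mulr_sumr; congr (_ - _ + _).
  by rewrite mulr_natl.
rewrite !big_split /= sumrN sumr_const card_ord.
have -> : \sum_i k%:R * y i ^+ 2 = k%:R * \sum_i y i ^+ 2 by rewrite mulr_sumr.
have -> : \sum_i 2 * y i * \sum_j y j = 2 * (\sum_i y i) * \sum_j y j.
  by rewrite -mulr_suml -mulr_sumr.
rewrite mulr_natr; ring.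
Qed.

Section Comb.
Variables (R : realType) (V : finType) (E : {set {set V}}) (k : nat) (col : V -> 'I_k).

Definition ind (i : 'I_k) (u : V) : R := bR R (col u == i).
Definition aa (e : {set V}) (i : 'I_k) : nat := #|e :&: cclass col i|.
Definition hh (i j : 'I_k) (u : V) : R := ind i u - ind j u.

Lemma ind_sum u : \sum_i ind i u = 1.
Proof.
rewrite (bigD1 (col u)) //= big1 ?addr0; first by rewrite /ind /bR eqxx.
by move=> i hi; rewrite /ind /bR eq_sym (negbTE hi).
Qed.

Lemma ind_sq i u : ind i u ^+ 2 = ind i u.
Proof. by rewrite /ind /bR; case: (col u == i); rewrite ?expr1n ?expr0n. Qed.

Lemma gfunE i j : i != j -> gfun R col i j = hh i j.
Proof.
move=> ij; apply: functional_extensionality => u; rewrite /gfun /hh /ind /bR.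
case: eqP => [ci|_]; case: eqP => [cj|_] //.
- by move: ij; rewrite -ci -cj eqxx.
- by rewrite subr0.
- by rewrite sub0r.
- by rewrite subr0.
Qed.

Lemma sE_ind e i : sE (ind i) e = (aa e i)%:R.
Proof.
rewrite /aa.
have -> : e :&: cclass col i = [set x in e | col x == i].
  by apply/setP => x; rewrite !inE.
by rewrite cntR.
Qed.

Lemma sE_hh e i j : sE (hh i j) e = (aa e i)%:R - (aa e j)%:R.
Proof. by rewrite /sE /hh sumrB -!/(sE _ e) !sE_ind. Qed.

Lemma aa_sum e : \sum_i (aa e i)%:R = (#|e|)%:R :> R.
Proof.
under eq_bigr do rewrite -sE_ind.
rewrite /sE exchange_big /=.
under eq_bigr do rewrite ind_sum.
by rewrite sumr_const; congr (_ *+ _); apply: eq_card => u; rewrite inE.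
Qed.

Lemma SUMQ (c d : nat) (lam1 : R) :
  uniform E c -> lam1 * (k%:R - 1) = k%:R * d%:R - c%:R ->
  \sum_i \sum_j Qf E lam1 (hh i j) =
  \sum_(e in E) (2 * k%:R * \sum_i (aa e i)%:R * ((aa e i)%:R - d%:R)).
Proof.
move=> unif hl.
under eq_bigr do under eq_bigr do rewrite QfE.
under eq_bigr do rewrite exchange_big /=.
rewrite exchange_big /=; apply: eq_big => // e eE.
pose x i : R := (aa e i)%:R.
have -> : \sum_i \sum_j (sE (hh i j) e ^+ 2 - lam1 * \sum_(u in e) hh i j u ^+ 2) =
  \sum_i \sum_j (x i - x j) ^+ 2 - lam1 * \sum_(u in e) \sum_i \sum_j (ind i u - ind j u) ^+ 2.
  have -> : lam1 * \sum_(u in e) \sum_i \sum_j (ind i u - ind j u) ^+ 2 =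
     \sum_i \sum_j lam1 * \sum_(u in e) hh i j u ^+ 2.
    rewrite exchange_big /= mulr_sumr; apply: eq_bigr => i _.
    by rewrite exchange_big /= mulr_sumr.
  rewrite -sumrB; apply: eq_bigr => i _; rewrite -sumrB.
  by apply: eq_bigr => j _; rewrite sE_hh.
rewrite (SQ x).
rewrite (eq_bigr _ (fun u _ => SQ (fun i => ind i u))).
under eq_bigr do under eq_bigr do rewrite ind_sq.
under eq_bigr do rewrite ind_sum.
rewrite sumr_const.
have hx : \sum_i x i = c%:R by rewrite /x aa_sum unif.
rewrite hx -(unif e eE).
have -> : \sum_i x i * (x i - d%:R) = \sum_i x i ^+ 2 - d%:R * \sum_i x i.
  by rewrite mulr_sumr -sumrB; apply: eq_bigr => i _; ring.
rewrite hx (unif e eE) -mulr_natr.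
set L := lam1 * _.
have -> : L = 2 * c%:R * (lam1 * (k%:R - 1)) by rewrite /L; ring.
rewrite hl; ring.
Qed.

End Comb.

Section Cond.
Variables (R : realType) (V : finType) (E : {set {set V}}) (k : nat) (col : V -> 'I_k).
Variables (c d : nat).
Hypothesis noiso : no_isolated E.
Hypothesis unif : uniform E c.
Hypothesis d1 : (1 <= d)%N.
Hypothesis c1 : cond1 E d col.

Definition meets (e : {set V}) (j : 'I_k) : bool := e :&: cclass col j != set0.
Definition Nn (j : 'I_k) (v : V) : nat :=
  #|[set e in E | (v \in e) && (e :&: cclass col j != set0)]|.

Lemma bR_and (a b : bool) : bR R (a && b) = bR R a * bR R b.
Proof. by rewrite /bR; case: a; case: b; rewrite ?mulr1 ?mulr0. Qed.

Lemma aa_c1 e j : e \in E -> (aa col e j)%:R = d%:R * bR R (meets e j) :> R.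
Proof.
move=> eE; rewrite /meets /bR /aa; case: ifP => [h|/negbFE/eqP ->].
  case: (c1 eE j) => [/eqP|->]; last by rewrite mulr1.
  by rewrite cards_eq0 (negbTE h).
by rewrite cards0 mulr0.
Qed.

Lemma NnE j v : (Nn j v)%:R = \sum_(e in E) bR R (v \in e) * bR R (meets e j) :> R.
Proof. by rewrite /Nn cntR; apply: eq_bigr => e _; rewrite bR_and. Qed.

Lemma SfH i j v : Sf E (hh R col i j) v = d%:R * ((Nn i v)%:R - (Nn j v)%:R).
Proof.
rewrite /Sf !NnE -sumrB mulr_sumr; apply: eq_bigr => e eE.
by rewrite sE_hh !aa_c1 //; ring.
Qed.

Lemma hlapH i j v :
  hlap E (hh R col i j) v = (degR R E v)^-1 * (d%:R * ((Nn i v)%:R - (Nn j v)%:R)).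
Proof. by rewrite hlapE // SfH. Qed.

Lemma Nn_self v : Nn (col v) v = hdeg E v.
Proof.
rewrite /Nn /hdeg; apply: eq_card => e; rewrite !inE.
case: (e \in E) => //=; case ve: (v \in e) => //=.
by apply/set0Pn; exists v; rewrite !inE ve eqxx.
Qed.

Lemma Nn_sum v : d%:R * \sum_j (Nn j v)%:R = c%:R * degR R E v.
Proof.
under eq_bigr do rewrite NnE.
rewrite exchange_big /= mulr_sumr degRE mulr_sumr; apply: eq_bigr => e eE.
rewrite -mulr_sumr mulrCA.
have -> : d%:R * \sum_j bR R (meets e j) = \sum_j (aa col e j)%:R.
  by rewrite mulr_sumr; apply: eq_bigr => j _; rewrite aa_c1.
by rewrite aa_sum (unif eE) mulrC.
Qed.


Lemma k_gt1 (i j : 'I_k) : i != j -> (k%:R - 1 : R) != 0.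
Proof.
move=> ij; rewrite subr_eq0; apply/negP => /eqP k1.
have : k = 1%N by apply/eqP; rewrite -(eqr_nat R); apply/eqP.
move=> {}k1; move: ij; case: i => [i ii]; case: j => [j jj]; rewrite -val_eqE /=.
move: ii jj; rewrite k1; lia.
Qed.

Lemma degR_neq0 v : degR R E v != 0.
Proof. by rewrite gt_eqF // degR_gt0. Qed.

Lemma dR_neq0 : (d%:R : R) != 0.
Proof. by rewrite pnatr_eq0 -lt0n. Qed.

Lemma E3 : (forall i j, i != j -> forall v, col v != i -> col v != j ->
              hlap E (gfun R col i j) v = 0) -> cond3 E R c d col.
Proof.
move=> H i j ij v; rewrite inE => /eqP cv.
have kn := k_gt1 ij; have dn := dR_neq0; have gn := degR_neq0 v.
set m : R := (Nn j v)%:R.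
have hm : forall j', j' != i -> (Nn j' v)%:R = m.
  move=> j' j'i; case: (eqVneq j j') => [<-//|jj'].
  have := H j j' jj' v; rewrite cv => /(_ ij); rewrite eq_sym j'i => /(_ isT).
  rewrite gfunE // hlapH // => /eqP; rewrite mulf_eq0 invr_eq0 (negbTE gn) /=.
  rewrite mulf_eq0 (negbTE dn) /= subr_eq0 => /eqP; rewrite /m => ->.
  by [].
have hs := Nn_sum v.
rewrite (bigD1 i) //= -cv Nn_self cv in hs.
rewrite (eq_bigr (fun _ => m)) in hs; last by move=> j' /hm.
have hk : \sum_(j' | j' != i) m = k%:R * m - m.
  have h : \sum_(j' < k) m = k%:R * m by rewrite sumr_const card_ord mulr_natl.
  by rewrite (bigD1 i) //= in h; rewrite -h; ring.
rewrite hk -/(degR R E v) in hs.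
rewrite -/m -/(degR R E v); apply: (mulfI dn); apply: (mulIf kn).
have e1 : d%:R * (degR R E v * ((c%:R / d%:R - 1) / (k%:R - 1))) * (k%:R - 1)
   = degR R E v * (c%:R - d%:R).
  by field; rewrite kn dn.
rewrite e1; lra.
Qed.

Lemma C3E (i j : 'I_k) v0 : col v0 = i -> cond3 E R c d col -> i != j ->
  eigenfun E (gfun R col i j) ((d%:R * k%:R - c%:R) / (k%:R - 1)).
Proof.
move=> cv0 h3 ij; have kn := k_gt1 ij; have dn := dR_neq0.
split; first by exists v0; rewrite /gfun cv0 eqxx oner_neq0.
move=> v; have gn := degR_neq0 v.
rewrite gfunE // hlapH // /hh /ind /bR.
set rho : R := (c%:R / d%:R - 1) / (k%:R - 1).
have Hn : forall a b, a != b -> col v = a -> (Nn b v)%:R = degR R E v * rho.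
  by move=> a b ab ca; have := h3 a b ab v; rewrite inE ca eqxx; apply.
case: (eqVneq (col v) i) => [ci|ci].
  have Ni : Nn i v = hdeg E v by rewrite -ci Nn_self.
  rewrite Ni ci (negbTE ij) (Hn i j ij ci) -/(degR R E v).
  rewrite /rho; field; rewrite kn dn gn //.
case: (eqVneq (col v) j) => [cj|cj].
  have Nj : Nn j v = hdeg E v by rewrite -cj Nn_self.
  rewrite Nj (Hn j i _ cj) -/(degR R E v); last by rewrite eq_sym.
  rewrite /rho; field; rewrite kn dn gn //.
rewrite (Hn (col v) i ci erefl) (Hn (col v) j cj erefl).
by rewrite !subrr !mulr0.
Qed.

End Cond.

Lemma class_ne (V : finType) (E : {set {set V}}) (d k : nat) (col : V -> 'I_k) :
  is_chi E d k -> dproper E d col -> forall i, exists v, col v = i.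
Proof.
move=> [_ hmin] hp i.
case: (boolP [exists v, col v == i]) => [/existsP [v /eqP]|]; first by exists v.
rewrite negb_exists => /forallP hn; exfalso.
have kpos : (0 < k)%N by have := ltn_ord i; lia.
pose m (v : V) : nat := if (col v < i)%N then nat_of_ord (col v) else (col v).-1.
have pf : forall v, (m v < k.-1)%N.
  move=> v; have : (nat_of_ord (col v) != nat_of_ord i) by rewrite val_eqE; apply: hn.
  rewrite /m; have := ltn_ord (col v); have := ltn_ord i; case: (ltnP (col v) i) => /=; lia.
pose col' (v : V) : 'I_k.-1 := Ordinal (pf v).
apply: (hmin k.-1); first by lia.
exists col' => e eE j'.
have hJ : ((if (j' < i)%N then nat_of_ord j' else j'.+1) < k)%N.
  by have := ltn_ord j'; have := ltn_ord i; case: (ltnP j' i) => _; lia.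
apply: leq_trans (hp e eE (Ordinal hJ)).
apply: subset_leq_card; apply/subsetP => v; rewrite !inE => /andP [-> /eqP h] /=.
have : (nat_of_ord (col v) != nat_of_ord i) by rewrite val_eqE; apply: hn.
rewrite -val_eqE /= -h /col' /m /=.
have := ltn_ord (col v); have := ltn_ord i.
case: (ltnP (col v) i) => /= h1; first by rewrite h1 eqxx.
move=> *.
have h2 : ((col v).-1 < i)%N = false by apply/negbTE; rewrite -leqNgt; lia.
rewrite h2; apply/eqP; lia.
Qed.

Lemma k_ge2 (V : finType) (E : {set {set V}}) (c d k : nat) (col : V -> 'I_k) :
  (d < c)%N -> uniform E c -> E != set0 -> dproper E d col -> (2 <= k)%N.
Proof.
move=> dc unif /set0Pn [e eE] hp.
have : (0 < #|e|)%N by rewrite (unif e eE); lia.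
rewrite card_gt0 => /set0Pn [v ve].
case: k col hp v ve => [|[|k]] col hp v ve //; first by case: (col v).
have := hp e eE (col v).
have -> : [set u in e | col u == col v] = e.
  apply/setP => u; rewrite !inE.
  by case: (u \in e) => //=; apply/eqP; case: (col u) => [[]//] ?; case: (col v) => [[]//] ? /=; apply: val_inj.
rewrite (unif e eE); lia.
Qed.

Lemma Df_ge0 (R : realType) (V : finType) (E : {set {set V}}) (f : V -> R) : 0 <= Df E f.
Proof. rewrite DfE; apply: sumr_ge0 => e _; apply: sumr_ge0 => u _; exact: sqr_ge0. Qed.

Lemma Nf_ge0 (R : realType) (V : finType) (E : {set {set V}}) (f : V -> R) : 0 <= Nf E f.
Proof. by apply: sumr_ge0 => e _; exact: sqr_ge0. Qed.

Lemma Df_scale (R : realType) (V : finType) (E : {set {set V}}) (f : V -> R) a :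
  Df E (fun u => a * f u) = a ^+ 2 * Df E f.
Proof. by rewrite /Df mulr_sumr; apply: eq_bigr => v _; ring. Qed.

Lemma Nf_scale (R : realType) (V : finType) (E : {set {set V}}) (f : V -> R) a :
  Nf E (fun u => a * f u) = a ^+ 2 * Nf E f.
Proof.
rewrite /Nf mulr_sumr; apply: eq_bigr => e _; rewrite /sE -mulr_sumr; ring.
Qed.

Lemma VAR (R : realType) (V : finType) (E : {set {set V}}) (lam1 : R) :
  no_isolated E -> smallest_eigval E lam1 -> forall f, lam1 * Df E f <= Nf E f.
Proof.
move=> noiso [[f1 [[v0 _] _]] hmin] f.
have w1 : forall v, 1 <= degR R E v by move=> v; rewrite /degR ler1n; apply: noiso.
have [f0 [D1 hmin0]] := Analysis.min_exists E v0 w1.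
set mu := Nf E f0.
have Hall : forall g, mu * Df E g <= Nf E g.
  move=> g; have := Df_ge0 E g; rewrite le_eqVlt => /orP [/eqP <-|Dp].
    by rewrite mulr0 Nf_ge0.
  pose a := (Num.sqrt (Df E g))^-1.
  have sq : a ^+ 2 * Df E g = 1.
    rewrite /a exprVn sqr_sqrtr ?mulVf // ?gt_eqF // ltW //.
  have := hmin0 (fun u => a * g u); rewrite -/(Df E _) Df_scale sq => /(_ erefl).
  rewrite -[X in X <= _ -> _]/(Nf E f0) -/mu -[X in _ <= X -> _]/(Nf E (fun u => a * g u)) Nf_scale => h.
  have : mu * Df E g <= a ^+ 2 * Nf E g * Df E g by rewrite ler_pM2r.
  by rewrite mulrAC sq mul1r.
have eig : is_eigval E mu.
  exists f0; split.
    apply/existsP; apply: contraT; rewrite negb_exists => /forallP h0.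
    move: D1; rewrite big1 => [/eqP|v _]; first by rewrite eq_sym oner_eq0.
    by have := h0 v; rewrite negbK => /eqP ->; rewrite expr0n mulr0.
  have D1' : Df E f0 = 1 := D1.
  by apply: eq_eigen => //; rewrite D1' mulr1.
have := hmin _ eig => lm.
apply: le_trans (Hall f); apply: ler_wpM2r => //; exact: Df_ge0.
Qed.

Lemma moreoverL (R : realType) (V : finType) (E : {set {set V}}) (c d chi : nat)
  (col : V -> 'I_chi) :
  (1 <= d)%N -> uniform E c -> no_isolated E -> is_chi E d chi ->
  dproper E d col -> cond1 E d col ->
     ((forall i j : 'I_chi, i != j -> exists mu, eigenfun E (gfun R col i j) mu)
        <-> cond3 E R c d col)
     /\
     ((forall i j : 'I_chi, i != j -> exists mu, eigenfun E (gfun R col i j) mu) ->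
        forall i j : 'I_chi, i != j ->
          eigenfun E (gfun R col i j) ((d%:R * chi%:R - c%:R) / (chi%:R - 1))).
Proof.
move=> d1 unif noiso hchi hp c1.
have A : (forall i j : 'I_chi, i != j -> exists mu, eigenfun E (gfun R col i j) mu) ->
         cond3 E R c d col.
  move=> H; apply: E3 => // i j ij v ci cj.
  have [mu [_ hm]] := H i j ij.
  by rewrite hm /gfun (negbTE ci) (negbTE cj) mulr0.
have B : cond3 E R c d col -> forall i j : 'I_chi, i != j ->
          eigenfun E (gfun R col i j) ((d%:R * chi%:R - c%:R) / (chi%:R - 1)).
  move=> h3 i j ij; have [v0 cv0] := class_ne hchi hp i.
  exact: (C3E noiso d1 c1 cv0 h3 ij).
split; first split.
- exact: A.
- by move=> h3 i j ij; exists ((d%:R * chi%:R - c%:R) / (chi%:R - 1)); apply: B.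
- by move=> H; apply: B; apply: A.
Qed.

Theorem mainTheorem8 (R : realType) (V : finType) (E : {set {set V}})
    (c d chi : nat) (lam1 : R) :
  (2 <= c)%N -> (1 <= d)%N -> (d <= c - 1)%N ->
  uniform E c -> E != set0 -> no_isolated E ->
  smallest_eigval E lam1 -> is_chi E d chi ->
  (* main part, under the equality hypothesis *)
  (chi%:R = (c%:R - lam1) / (d%:R - lam1) ->
   forall col : V -> 'I_chi, dproper E d col ->
     [/\ cond1 E d col,
         (forall i j : 'I_chi, i != j ->
            eigenfun E (gfun R col i j) lam1 /\
            lam1 = (d%:R * chi%:R - c%:R) / (chi%:R - 1))
       & cond3 E R c d col])
  /\
  (* "moreover" part, without the equality hypothesis *)
  (forall col : V -> 'I_chi, dproper E d col -> cond1 E d col ->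
     ((forall i j : 'I_chi, i != j -> exists mu, eigenfun E (gfun R col i j) mu)
        <-> cond3 E R c d col)
     /\
     ((forall i j : 'I_chi, i != j -> exists mu, eigenfun E (gfun R col i j) mu) ->
        forall i j : 'I_chi, i != j ->
          eigenfun E (gfun R col i j) ((d%:R * chi%:R - c%:R) / (chi%:R - 1)))).
Proof.
move=> c2 d1 dc unif En noiso sm hchi.
split; last by move=> col hp c1; exact: moreoverL.
move=> heq col hp.
have k2 : (2 <= chi)%N by apply: (k_ge2 (c:=c)) hp => //; lia.
have kn : (chi%:R - 1 : R) != 0.
  rewrite subr_eq0; apply/negP => /eqP h.
  have : chi = 1%N by apply/eqP; rewrite -(eqr_nat R); apply/eqP.
  by move=> h1; move: k2; rewrite h1.
have hdl : (d%:R - lam1 : R) != 0.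
  apply/negP => /eqP h; move: heq; rewrite h invr0 mulr0 => /eqP; rewrite pnatr_eq0.
  by move/eqP => c0; move: k2; rewrite c0.
have hl : lam1 * (chi%:R - 1) = chi%:R * d%:R - c%:R.
  have : chi%:R * (d%:R - lam1) = c%:R - lam1 by rewrite heq mulfVK.
  move=> h; lra.
have HQ := SUMQ col unif hl.
have Qge : forall i j, 0 <= Qf E lam1 (hh R col i j).
  by move=> i j; rewrite /Qf subr_ge0; apply: VAR.
have xle : forall e, e \in E -> forall i, (aa col e i <= d)%N.
  move=> e eE i; rewrite /aa.
  have -> : e :&: cclass col i = [set x in e | col x == i] by apply/setP => x; rewrite !inE.
  exact: hp.
have tle : forall e, e \in E ->
    2 * chi%:R * \sum_i (aa col e i)%:R * ((aa col e i)%:R - d%:R) <= 0 :> R.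
  move=> e eE; rewrite pmulr_rle0; last by rewrite mulr_gt0 // ltr0n; lia.
  rewrite -oppr_ge0 -sumrN; apply: sumr_ge0 => i _.
  rewrite -mulrN mulr_ge0 // oppr_ge0 subr_le0 ler_nat; exact: xle.
have L0 : \sum_i \sum_j Qf E lam1 (hh R col i j) = 0.
  apply/eqP; rewrite eq_le; apply/andP; split.
    by rewrite HQ; apply: sumr_le0 => e eE; apply: tle.
  by apply: sumr_ge0 => i _; apply: sumr_ge0.
have Q0 : forall i j, Qf E lam1 (hh R col i j) = 0.
  move=> i j.
  have nn : forall i', true -> 0 <= \sum_j Qf E lam1 (hh R col i' j).
    by move=> i' _; apply: sumr_ge0 => j' _; apply: Qge.
  have nn2 : forall j', true -> 0 <= Qf E lam1 (hh R col i j') by move=> j' _; apply: Qge.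
  have h1 : \sum_j Qf E lam1 (hh R col i j) = 0 := psumr_eq0P nn L0 isT.
  exact: (psumr_eq0P nn2 h1 isT).
have c1 : cond1 E d col.
  move=> e eE i.
  have T0 : - (2 * chi%:R * \sum_i (aa col e i)%:R * ((aa col e i)%:R - d%:R)) = 0 :> R.
    move: L0; rewrite HQ => /eqP; rewrite -oppr_eq0 -sumrN => /eqP h.
    apply: (psumr_eq0P _ h) => // e' e'E; rewrite oppr_ge0; exact: tle.
  have cn : (2 * chi%:R : R) != 0 by rewrite mulf_neq0 // pnatr_eq0; lia.
  move/eqP: T0; rewrite oppr_eq0 mulf_eq0 (negbTE cn) /=.
  rewrite -oppr_eq0 -sumrN => /eqP h.
  have nn : forall i0 : 'I_chi, true -> 0 <= - ((aa col e i0)%:R * ((aa col e i0)%:R - d%:R)) :> R.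
    move=> i0 _; rewrite -mulrN mulr_ge0 // oppr_ge0 subr_le0 ler_nat; exact: xle.
  have := psumr_eq0P nn h (i:=i) isT.
  move/eqP; rewrite oppr_eq0 mulf_eq0 pnatr_eq0 subr_eq0 eqr_nat.
  by case/orP => /eqP h0; [left|right]; exact: h0.
have eqQ : forall i j, lam1 * Df E (hh R col i j) = Nf E (hh R col i j).
  by move=> i j; apply/eqP; rewrite eq_sym -subr_eq0; apply/eqP; apply: Q0.
have lamE : lam1 = (d%:R * chi%:R - c%:R) / (chi%:R - 1).
  by apply: (mulIf kn); rewrite hl mulfVK // mulrC.
have eigs : forall i j : 'I_chi, i != j -> eigenfun E (gfun R col i j) lam1.
  move=> i j ij; have [v0 cv0] := class_ne hchi hp i.
  split; first by exists v0; rewrite /gfun cv0 eqxx oner_neq0.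
  rewrite gfunE //; apply: eq_eigen => //; first by move=> g; apply: VAR.
split => //.
  by move=> i j ij; split => //; apply: eigs.
have := @moreoverL R V E c d chi col d1 unif noiso hchi hp c1.
case=> [[h _] _]; apply: h => i j ij; exists lam1; exact: eigs.
Qed.
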